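(* There exist constants $m_0\in\mathbb N$ and $C>0$ such that for all $n$, all $m>m_0$ and all $p\in(0,1)$ with $mp^3\le1$, $$\|\bar g_1\ast_1^0\bar g_1\|_2^2\le C\big(mp^5e^{-4mp^2}+(mp^3)^2e^{-4mp^2}\big),$$ $$\|\bar g_2\ast_1^1\bar g_2\|_2^2\le C\big(mp^4e^{-4mp^2}+(mp^3)^2e^{-4mp^2}\big),$$ $$\|\bar g_2\ast_1^1\bar g_1\|_2^2\le C\big(mp^5e^{-4mp^2}+(mp^3)^2e^{-4mp^2}\big).$$
   Context: $\mu_{m,p}$ is the measure on $\{0,1\}^m$ with $\mu_{m,p}(x)=p^{|x|}(1-p)^{m-|x|}$, $|x|=\sum_ix_i$; norms are $L^2$ norms with respect to products of $\mu_{m,p}$. $g:\{0,1\}^m\times\{0,1\}^m\to\{0,1\}$, $g(x,y)=1$ if $x_i=y_i=1$ for some $i$ and $0$ otherwise; $g_1(x)=\int g(x,y)\,d\mu_{m,p}(y)$; $\hat p=1-(1-p^2)^m$; $\bar g_2=g-\hat p$, $\bar g_1=g_1-\hat p$. Contraction: for $f$ on $(\{0,1\}^m)^k$, $h$ on $(\{0,1\}^m)^l$, $0\le a\le b\le k\wedge l$: $f\ast_b^ah(x_1,\ldots,x_{b-a},y_1,\ldots,y_{k-b},z_1,\ldots,z_{l-b})=\int_{(\{0,1\}^m)^a}f(w,x,y)h(w,x,z)\,d\mu_{m,p}^{\otimes a}(w)$. *)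

(* Defs.v *)
From mathcomp Require Import all_boot all_order all_algebra.
From mathcomp Require Import reals sequences exp.
Set Implicit Arguments. Unset Strict Implicit. Unset Printing Implicit Defensive.
Import Order.TTheory GRing.Theory Num.Theory.
Local Open Scope ring_scope.

Section Defs.
Variables (R : realType) (m : nat) (p : R).

Definition pt := {ffun 'I_m -> bool}.
Definition pt0 : pt := [ffun => false].

Definition wt (x : pt) : nat := (\sum_i (x i : nat))%N.

Definition mu (x : pt) : R := p ^+ wt x * (1 - p) ^+ (m - wt x).

Definition mu_seq (s : seq pt) : R := \prod_(w <- s) mu w.

(* integral of a function of j variables in ({0,1}^m)^j against mu^{(x) j};
   functions of several variables are represented as functions on sequences
   of points (only the first j entries matter) *)
Definition intj (j : nat) (F : seq pt -> R) : R :=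
  \sum_(s : j.-tuple pt) mu_seq s * F s.

Definition norm2sq (j : nat) (F : seq pt -> R) : R := intj j (fun s => F s ^+ 2).

(* number of variables of the contraction f *_b^a h, f of k, h of l variables *)
Definition contr_dim (k l a b : nat) : nat := (b - a + (k - b) + (l - b))%N.

(* contraction: (f *_b^a h)(x_1..x_{b-a}, y_1..y_{k-b}, z_1..z_{l-b})
     = int f(w,x,y) h(w,x,z) dmu^{(x) a}(w) *)
Definition contr (k l a b : nat) (f h : seq pt -> R) : seq pt -> R :=
  fun s =>
    let x := take (b - a) s in
    let y := take (k - b) (drop (b - a) s) in
    let z := drop (b - a + (k - b)) s in
    intj a (fun w => f (w ++ x ++ y) * h (w ++ x ++ z)).

Definition g (x y : pt) : R := if [exists i, x i && y i] then 1 else 0.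

Definition g1 (x : pt) : R := \sum_(y : pt) mu y * g x y.

Definition phat : R := 1 - (1 - p ^+ 2) ^+ m.

Definition gbar2 (s : seq pt) : R := g (nth pt0 s 0) (nth pt0 s 1) - phat.
Definition gbar1 (s : seq pt) : R := g1 (nth pt0 s 0) - phat.

End Defs.

Arguments mu {R} m p x.
Arguments mu_seq {R} m p s.
Arguments intj {R} m p j F.
Arguments norm2sq {R} m p j F.
Arguments contr {R} m p k l a b f h _.
Arguments g1 {R} m p x.
Arguments phat {R} m p.
Arguments gbar2 {R} m p s.
Arguments gbar1 {R} m p s.

(* Main.v *)
Require Import Defs.
From mathcomp Require Import all_boot all_order all_algebra.
From mathcomp Require Import reals sequences exp.
From mathcomp Require Import ring lra zify.
Import Order.TTheory GRing.Theory Num.Theory.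
Local Open Scope ring_scope.

Module A.

Section Gen.
Variables (R : realType) (m : nat) (p : R).

Lemma mu_prod (x : pt m) : mu m p x = \prod_i (if x i then p else 1 - p).
Proof.
symmetry; rewrite /mu (bigID (fun i => x i)) /=.
under eq_bigr => i Hi do rewrite Hi.
have -> : \prod_(i < m | ~~ x i) (if x i then p else 1 - p) = \prod_(i < m | ~~ x i) (1 - p).
  by apply: eq_bigr => i /negbTE ->.
rewrite !prodr_const.
have Hw : wt x = #|[pred i | x i]|.
  rewrite /wt -sum1_card [RHS]big_mkcond /=.
  by apply: eq_bigr => i _; rewrite inE; case: (x i).
have Hc : (m - wt x)%N = #|[pred i | ~~ x i]|.
  rewrite Hw -{1}(card_ord m) -(cardC [pred i | x i]) addKn.
  by apply: eq_card => i.
rewrite Hc Hw; congr (_ ^+ _ * _ ^+ _); apply: eq_card => i //.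
Qed.


Lemma sum_mu_prod (F : 'I_m -> bool -> R) :
  \sum_(x : pt m) mu m p x * \prod_i F i (x i)
  = \prod_i ((1 - p) * F i false + p * F i true).
Proof.
rewrite (eq_bigr (fun x : pt m => \prod_i ((if x i then p else 1 - p) * F i (x i)))); last first.
  by move=> x _; rewrite mu_prod -big_split.
rewrite (eq_bigr (fun i => \sum_(b : bool) (if b then p else 1 - p) * F i b)); last first.
  by move=> i _; rewrite big_bool /= addrC.
by rewrite bigA_distr_bigA.
Qed.

Lemma intj0 F : intj m p 0 F = F [::].
Proof.
rewrite /intj (eq_bigr (fun=> mu_seq m p [::] * F [::])); last first.
  by move=> s _; rewrite tuple0.
by rewrite sumr_const card_tuple expn0 /mu_seq big_nil mul1r.
Qed.

Lemma intj1 F : intj m p 1 F = \sum_(x : pt m) mu m p x * F [:: x].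
Proof.
rewrite /intj (reindex (fun x : pt m => [tuple x])) /=; last first.
  exists (fun t : 1.-tuple (pt m) => thead t) => // t _.
  by apply: val_inj => /=; case: t => [[|a [|b s]]] //=.
by apply: eq_bigr => x _; rewrite /mu_seq big_cons big_nil mulr1.
Qed.

Lemma intj2 F : intj m p 2 F =
  \sum_(x : pt m) \sum_(y : pt m) mu m p x * mu m p y * F [:: x; y].
Proof.
rewrite pair_big /= /intj (reindex (fun xy : pt m * pt m => [tuple xy.1; xy.2])) /=; last first.
  exists (fun t : 2.-tuple (pt m) => (thead t, thead (behead_tuple t))).
    by case.
  by move=> t _; apply: val_inj => /=; case: t => [[|a [|b [|c s]]]] //=.
by apply: eq_bigr => -[x y] _; rewrite /mu_seq !big_cons big_nil mulr1 mulrA.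
Qed.


Definition chi (b c : bool) : R := if b && c then 0 else 1.
Definition psi (b : bool) : R := if b then 1 - p else 1.

Lemma prod_const (c : R) : \prod_(i < m) c = c ^+ m.
Proof. by rewrite prodr_const card_ord. Qed.

Lemma g_prod (x y : pt m) : g R x y = 1 - \prod_i chi (x i) (y i).
Proof.
rewrite /g; case: existsP => [[i Hi]|H].
  by rewrite (bigD1 i) //= /chi Hi mul0r subr0.
rewrite big1 ?subrr // => i _; rewrite /chi.
by have /negbTE -> : ~~ (x i && y i) by apply/negP => Hi; apply: H; exists i.
Qed.

Lemma sum_mu1 : \sum_(x : pt m) mu m p x = 1.
Proof.
rewrite (eq_bigr (fun x : pt m => mu m p x * \prod_(i < m) (fun (_ : 'I_m) (_ : bool) => (1 : R)) i (x i))); last first.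
  by move=> x _; rewrite big1 ?mulr1.
by rewrite (sum_mu_prod (fun _ _ => 1)) /= prod_const !mulr1 subrK expr1n.
Qed.

Lemma g1_prod (x : pt m) : g1 m p x = 1 - \prod_i psi (x i).
Proof.
rewrite /g1 (eq_bigr (fun y : pt m => mu m p y - mu m p y * \prod_i (fun i b => chi (x i) b) i (y i))); last first.
  by move=> y _; rewrite g_prod mulrBr mulr1.
rewrite sumrB sum_mu1 (sum_mu_prod (fun i b => chi (x i) b)); congr (_ - _); apply: eq_bigr => i _.
by rewrite /chi /psi andbF andbT; case: (x i); rewrite ?mulr0 ?mulr1 ?addr0 ?subrK.
Qed.

Lemma phat_prod : phat m p = 1 - \prod_(i < m) (1 - p ^+ 2).
Proof. by rewrite prod_const. Qed.

Definition H1 (u : R * (bool -> bool -> R)) : R * (bool -> R) :=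
  (u.1, fun c => (1 - p) * u.2 false c + p * u.2 true c).

Lemma Lin1 (L : seq (R * (bool -> bool -> R))) (y : pt m) :
  \sum_(x : pt m) mu m p x * (\sum_(u <- L) u.1 * \prod_i u.2 (x i) (y i))
  = \sum_(u <- map H1 L) u.1 * \prod_i u.2 (y i).
Proof.
rewrite big_map.
transitivity (\sum_(x : pt m) \sum_(u <- L) u.1 * (mu m p x * \prod_i u.2 (x i) (y i))).
  by apply: eq_bigr => x _; rewrite mulr_sumr; apply: eq_bigr => u _; rewrite mulrCA.
rewrite exchange_big; apply: eq_bigr => u _ /=.
by rewrite -mulr_sumr (sum_mu_prod (fun i b => u.2 b (y i))).
Qed.

Definition H2 (u : R * (bool -> bool -> bool -> R)) : R * (bool -> bool -> R) :=
  (u.1, fun c d => (1 - p) * u.2 false c d + p * u.2 true c d).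

Lemma Lin2 (L : seq (R * (bool -> bool -> bool -> R))) (y z : pt m) :
  \sum_(x : pt m) mu m p x * (\sum_(u <- L) u.1 * \prod_i u.2 (x i) (y i) (z i))
  = \sum_(u <- map H2 L) u.1 * \prod_i u.2 (y i) (z i).
Proof.
rewrite big_map.
transitivity (\sum_(x : pt m) \sum_(u <- L) u.1 * (mu m p x * \prod_i u.2 (x i) (y i) (z i))).
  by apply: eq_bigr => x _; rewrite mulr_sumr; apply: eq_bigr => u _; rewrite mulrCA.
rewrite exchange_big; apply: eq_bigr => u _ /=.
by rewrite -mulr_sumr (sum_mu_prod (fun i b => u.2 b (y i) (z i))).
Qed.

Lemma Sq1 (L : seq (R * (bool -> R))) :
  \sum_(x : pt m) mu m p x * (\sum_(u <- L) u.1 * \prod_i u.2 (x i)) ^+ 2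
  = \sum_(u <- L) \sum_(v <- L) u.1 * v.1 *
      ((1 - p) * (u.2 false * v.2 false) + p * (u.2 true * v.2 true)) ^+ m.
Proof.
under eq_bigr => x _ do rewrite expr2 big_distrlr /= mulr_sumr.
rewrite exchange_big; apply: eq_bigr => u _.
under eq_bigr do rewrite mulr_sumr.
rewrite exchange_big; apply: eq_bigr => v _.
rewrite (eq_bigr (fun x : pt m => u.1 * v.1 * (mu m p x * \prod_i (fun i b => u.2 b * v.2 b) i (x i)))); last first.
  by move=> x _ /=; rewrite big_split /=; ring.
by rewrite -mulr_sumr (sum_mu_prod (fun i b => u.2 b * v.2 b)) prod_const.
Qed.

Lemma Sq2 (L : seq (R * (bool -> bool -> R))) :
  \sum_(x : pt m) \sum_(y : pt m) mu m p x * mu m p y *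
     (\sum_(u <- L) u.1 * \prod_i u.2 (x i) (y i)) ^+ 2
  = \sum_(u <- L) \sum_(v <- L) u.1 * v.1 *
      ((1 - p) * ((1 - p) * (u.2 false false * v.2 false false) + p * (u.2 false true * v.2 false true))
       + p * ((1 - p) * (u.2 true false * v.2 true false) + p * (u.2 true true * v.2 true true))) ^+ m.
Proof.
under eq_bigr => x _ do under eq_bigr => y _ do rewrite expr2 big_distrlr /= mulr_sumr.
under eq_bigr => x _ do rewrite exchange_big /=.
rewrite exchange_big; apply: eq_bigr => u _.
under eq_bigr => x _ do under eq_bigr => y _ do rewrite mulr_sumr.
under eq_bigr => x _ do rewrite exchange_big /=.
rewrite exchange_big; apply: eq_bigr => v _.
rewrite (eq_bigr (fun x : pt m => u.1 * v.1 * (mu m p x * \sum_(y : pt m) (mu m p y * \prod_i (fun i b => u.2 (x i) b * v.2 (x i) b) i (y i))))); last first.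
  move=> x _ /=; rewrite !mulr_sumr; apply: eq_bigr => y _.
  by rewrite big_split /=; ring.
rewrite -mulr_sumr.
under eq_bigr => x _ do rewrite (sum_mu_prod (fun i b => u.2 (x i) b * v.2 (x i) b)) /=.
by rewrite (sum_mu_prod (fun i b => (1 - p) * (u.2 b false * v.2 b false) + p * (u.2 b true * v.2 b true))) prod_const.
Qed.

End Gen.

End A.
Import A.

Module B.



Section Ana.
Variable R : realType.

Lemma bin_le_exp n k : ('C(n, k) <= n ^ k)%N.
Proof.
elim: n k => [|n IH] [|k] //.
rewrite binS.
apply: (leq_trans (leq_add (IH k.+1) (IH k))).
have h : (n ^ k <= n.+1 ^ k)%N by case: k {IH} => // k; rewrite leq_exp2r.
rewrite !expnS; nia.
Qed.

Lemma binR_le n k : ('C(n, k)%:R : R) <= n%:R ^+ k.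
Proof. by rewrite -natrX ler_nat bin_le_exp. Qed.

Definition Rem (n : nat) (a : R) :=
  (1 + a) ^+ n - 1 - n%:R * a - 'C(n, 2)%:R * a ^+ 2.

Lemma RemS n a : Rem n.+1 a = (1 + a) * Rem n a + 'C(n, 2)%:R * a ^+ 3.
Proof. rewrite /Rem binS bin1 natrD exprS -natr1; ring. Qed.

Lemma Rem_bound n a : `|Rem n a| <= 'C(n, 3)%:R * `|a| ^+ 3 * (1 + `|a|) ^+ n.
Proof.
elim: n => [|n IH]; first by rewrite /Rem /= !mul0r !subr0 subrr normr0.
rewrite RemS binS natrD.
have h1 : 0 <= `|a| by [].
have h2 : 1 <= (1 + `|a|) ^+ n by apply: exprn_ege1; lra.
have h3 : 0 <= 'C(n, 3)%:R * `|a| ^+ 3 * (1 + `|a|) ^+ n.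
  by rewrite !mulr_ge0 ?exprn_ge0 // addr_ge0.
have h4 : 0 <= ('C(n, 2)%:R : R) * `|a| ^+ 3 by rewrite mulr_ge0 ?exprn_ge0.
apply: (le_trans (ler_normD _ _)).
rewrite normrM [`|_ * a ^+ 3|]normrM normr_nat normrX.
have e1 : `|1 + a| <= 1 + `|a| by apply: (le_trans (ler_normD _ _)); rewrite normr1.
have e2 : `|1 + a| * `|Rem n a| <= (1 + `|a|) * ('C(n, 3)%:R * `|a| ^+ 3 * (1 + `|a|) ^+ n).
  by apply: ler_pM.
have e3 : ('C(n, 2)%:R : R) * `|a| ^+ 3 <= 'C(n, 2)%:R * `|a| ^+ 3 * (1 + `|a|) ^+ n.+1.
  rewrite -{1}(mulr1 (_ * _)); apply: ler_wpM2l => //.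
  by apply: exprn_ege1; lra.
rewrite [(1 + `|a|) ^+ n.+1]exprS in e3 *.
lra.
Qed.


Lemma sum_le_const (L : seq (R * R)) (F : R * R -> R) c :
  (forall w, w \in L -> F w <= c) -> \sum_(w <- L) F w <= (size L)%:R * c.
Proof.
elim: L => [|w L IH] H; first by rewrite big_nil mul0r.
rewrite big_cons /= -natr1 mulrDl mul1r addrC lerD //.
  by apply: IH => v Hv; apply: H; rewrite inE Hv orbT.
by apply: H; rewrite inE eqxx.
Qed.

Lemma pow_le_expR (x : R) n : 0 <= x -> (1 + x) ^+ n <= expR (n%:R * x).
Proof.
move=> hx; rewrite expRM_natl; apply: lerXn2r; rewrite ?inE ?nnegrE ?expR_ge0 //.
all: first [lra | exact: expR_ge1Dx].
Qed.

Lemma master (L : seq (R * R)) (m : nat) (P A : R) :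
  0 < P -> 0 <= A ->
  \sum_(w <- L) w.1 = 0 ->
  all (fun w => (`|w.1| <= 4) && (`|w.2 - P| <= A * P)) L ->
  \sum_(w <- L) w.1 * w.2 ^+ m <=
  P ^+ m * (m%:R * (`|\sum_(w <- L) w.1 * w.2| / P)
          + m%:R ^+ 2 * (`|\sum_(w <- L) w.1 * (w.2 - P) ^+ 2| / P ^+ 2)
          + (size L)%:R * (4 * ((m%:R * A) ^+ 3 * expR (m%:R * A)))).
Proof.
move=> hP hA hs hall.
have hP0 : P != 0 by rewrite gt_eqF.
have key : forall w : R * R, w.1 * w.2 ^+ m = P ^+ m * (w.1 + m%:R * (w.1 * w.2 / P - w.1)
     + 'C(m, 2)%:R * (w.1 * (w.2 - P) ^+ 2 / P ^+ 2) + w.1 * Rem m ((w.2 - P) / P)).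
  move=> w; rewrite /Rem.
  have -> : 1 + (w.2 - P) / P = w.2 / P by field.
  rewrite expr_div_n.
  have hPm : P ^+ m != 0 by rewrite expf_neq0.
  field; exact/andP.
rewrite (eq_bigr _ (fun w _ => key w)) -mulr_sumr.
apply: ler_wpM2l; first by rewrite exprn_ge0 // ltW.
rewrite !big_split /= -!mulr_sumr sumrB -!mulr_suml hs !(subr0, addr0, add0r).
set N1 := \sum_(w <- L) w.1 * w.2.
set N2 := \sum_(w <- L) w.1 * (w.2 - P) ^+ 2.
have b1 : m%:R * (N1 / P) <= m%:R * (`|N1| / P).
  by apply: ler_wpM2l => //; apply: ler_wpM2r; [rewrite invr_ge0 ltW | apply: ler_norm].
have b2 : 'C(m, 2)%:R * (N2 / P ^+ 2) <= m%:R ^+ 2 * (`|N2| / P ^+ 2).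
  apply: (le_trans (y := 'C(m, 2)%:R * (`|N2| / P ^+ 2))).
    by apply: ler_wpM2l => //; apply: ler_wpM2r; [rewrite invr_ge0 exprn_ge0 // ltW | apply: ler_norm].
  by apply: ler_wpM2r; [rewrite divr_ge0 // exprn_ge0 // ltW | apply: binR_le].
have b3 : \sum_(w <- L) w.1 * Rem m ((w.2 - P) / P) <= (size L)%:R * (4 * ((m%:R * A) ^+ 3 * expR (m%:R * A))).
  apply: sum_le_const => w Hw.
  move/allP: hall => /(_ w Hw) /andP [h1 h2].
  have ha : `|(w.2 - P) / P| <= A.
    by rewrite normrM normfV (gtr0_norm hP) ler_pdivrMr.
  apply: (le_trans (ler_norm _)); rewrite normrM.
  apply: ler_pM => //.
  apply: (le_trans (Rem_bound _ _)).
  set b := `|(w.2 - P) / P| in ha *.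
  have hb0 : 0 <= b by rewrite /b normr_ge0.
  have hy : (1 + b) ^+ m <= expR (m%:R * A).
    apply: (le_trans (y := (1 + A) ^+ m)); last by apply: pow_le_expR.
    by apply: lerXn2r; rewrite ?nnegrE; lra.
  have hx : b ^+ 3 <= A ^+ 3 by apply: lerXn2r; rewrite ?nnegrE.
  rewrite exprMn; apply: ler_pM.
  - by apply: mulr_ge0; rewrite ?exprn_ge0.
  - by apply: exprn_ge0; lra.
  - by apply: ler_pM; rewrite ?exprn_ge0 // binR_le.
  - exact: hy.
lra.
Qed.


Definition C0 : R := 160 + 9600 + 64 * 96 ^+ 3 * expR 96.

Lemma C0_gt0 : 0 < C0.
Proof.
rewrite /C0.
have ha : 0 < (96 : R) ^+ 3 by apply: exprn_gt0; lra.
have := mulr_gt0 ha (expR_gt0 96); lra.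
Qed.

Lemma master2 (L : seq (R * R)) (m k : nat) (p K1 K2 : R) :
  0 < p -> m%:R * p ^+ 3 <= 1 -> 1/4 <= (1 - p ^+ 2) ^+ 4 ->
  (1 - p ^+ 2) ^+ 4 <= expR (- (4 * p ^+ 2)) ->
  0 <= K1 <= 40 -> 0 <= K2 <= 600 -> (size L <= 16)%N ->
  \sum_(w <- L) w.1 = 0 ->
  all (fun w => (`|w.1| <= 4) && (`|w.2 - (1 - p ^+ 2) ^+ 4| <= 24 * p ^+ 3)) L ->
  `|\sum_(w <- L) w.1 * w.2| <= K1 * p ^+ k ->
  `|\sum_(w <- L) w.1 * (w.2 - (1 - p ^+ 2) ^+ 4) ^+ 2| <= K2 * p ^+ 6 ->
  \sum_(w <- L) w.1 * w.2 ^+ m <=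
  C0 * (m%:R * p ^+ k * expR (- (4 * m%:R * p ^+ 2))
        + (m%:R * p ^+ 3) ^+ 2 * expR (- (4 * m%:R * p ^+ 2))).
Proof.
move=> hp ht hP1 hPE /andP[hK1 hK1'] /andP[hK2 hK2'] hs hsum hall hN1 hN2.
set P := (1 - p ^+ 2) ^+ 4 in hP1 hPE hall hN2 *.
set E := expR (- (4 * m%:R * p ^+ 2)).
have hP : 0 < P by lra.
have hp3 : 0 <= p ^+ 3 by apply: exprn_ge0; lra.
have hA : 0 <= 96 * p ^+ 3 by apply: mulr_ge0; lra.
have hall' : all (fun w => (`|w.1| <= 4) && (`|w.2 - P| <= 96 * p ^+ 3 * P)) L.
  apply/allP => w Hw; move/allP: hall => /(_ w Hw) /andP[-> h] /=.
  have : 0 <= 96 * p ^+ 3 * (P - 1/4) by apply: mulr_ge0; lra.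
  lra.
apply: (le_trans (master _ m _ _ hP hA hsum hall')).
set N1 := \sum_(w <- L) w.1 * w.2 in hN1 *.
set N2 := \sum_(w <- L) w.1 * (w.2 - P) ^+ 2 in hN2 *.
have hm0 : 0 <= (m%:R : R) by apply: ler0n.
have ht0 : 0 <= m%:R * p ^+ 3 by apply: mulr_ge0.
set t := m%:R * p ^+ 3 in ht ht0 *.
have hpk : 0 <= p ^+ k by apply: exprn_ge0; lra.
have hp6 : 0 <= p ^+ 6 by apply: exprn_ge0; lra.
have b1 : `|N1| / P <= 160 * p ^+ k.
  rewrite ler_pdivrMr //.
  have : K1 * p ^+ k <= 40 * p ^+ k by apply: ler_wpM2r.
  have : 0 <= 160 * p ^+ k * (P - 1/4) by apply: mulr_ge0; lra.
  lra.
have b2 : `|N2| / P ^+ 2 <= 9600 * p ^+ 6.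
  have hP2' : 0 <= P ^+ 2 - 1/16.
    have -> : P ^+ 2 - 1/16 = (P - 1/4) * (P + 1/4) by rewrite expr2; field.
    by apply: mulr_ge0; lra.
  rewrite ler_pdivrMr; last by apply: exprn_gt0.
  have : K2 * p ^+ 6 <= 600 * p ^+ 6 by apply: ler_wpM2r.
  have : 0 <= 9600 * p ^+ 6 * (P ^+ 2 - 1/16) by apply: mulr_ge0; lra.
  lra.
have b1' : m%:R * (`|N1| / P) <= 160 * (m%:R * p ^+ k).
  by rewrite [160 * _]mulrCA; apply: ler_wpM2l.
have b2' : m%:R ^+ 2 * (`|N2| / P ^+ 2) <= 9600 * t ^+ 2.
  have -> : 9600 * t ^+ 2 = m%:R ^+ 2 * (9600 * p ^+ 6) by rewrite /t; ring.
  by apply: ler_wpM2l; first by apply: exprn_ge0.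
clear hN1 hN2 hall hall' hsum hK1 hK1' hK2 hK2' hA hP1 b1 b2.
have hPm : P ^+ m <= E.
  rewrite /E.
  have -> : - (4 * m%:R * p ^+ 2) = m%:R * (- (4 * p ^+ 2)) by ring.
  rewrite expRM_natl; apply: lerXn2r; last exact: hPE.
    by rewrite nnegrE; apply: ltW.
  by rewrite nnegrE; apply: expR_ge0.
have e96 : m%:R * (96 * p ^+ 3) = 96 * t by rewrite /t; ring.
have hE : 0 <= E by apply: expR_ge0.
clearbody N1 N2 t E P.
rewrite e96.
have he : expR (96 * t) <= expR 96 by rewrite ler_expR; lra.
have ht3 : (96 * t) ^+ 3 <= 96 ^+ 3 * t ^+ 2.
  rewrite exprMn; apply: ler_wpM2l; first by apply: exprn_ge0; lra.
  rewrite exprS; apply: ler_piMl; [by apply: exprn_ge0 | exact: ht].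
have b3 : (size L)%:R * (4 * ((96 * t) ^+ 3 * expR (96 * t)))
          <= 64 * 96 ^+ 3 * expR 96 * t ^+ 2.
  have hs' : (size L)%:R <= 16 :> R by rewrite (ler_nat R (size L) 16).
  have h0 : 0 <= (96 * t) ^+ 3 by apply: exprn_ge0; lra.
  have h1 : (96 * t) ^+ 3 * expR (96 * t) <= 96 ^+ 3 * t ^+ 2 * expR 96.
    apply: ler_pM; [exact: h0 | exact: expR_ge0 | exact: ht3 | exact: he].
  have h0' : 0 <= (96 * t) ^+ 3 * expR (96 * t) by apply: mulr_ge0; [exact: h0 | exact: expR_ge0].
  have h3 : (size L)%:R * (4 * ((96 * t) ^+ 3 * expR (96 * t))) <= 16 * (4 * ((96 * t) ^+ 3 * expR (96 * t))).
    apply: ler_wpM2r; last exact: hs'.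
    by apply: mulr_ge0; [lra | exact: h0'].
  lra.
have hT : 0 <= m%:R * (`|N1| / P) + m%:R ^+ 2 * (`|N2| / P ^+ 2) +
   (size L)%:R * (4 * ((96 * t) ^+ 3 * expR (96 * t))).
  apply: addr_ge0; first apply: addr_ge0.
  - by apply: mulr_ge0 => //; apply: divr_ge0 => //; lra.
  - by apply: mulr_ge0; [apply: exprn_ge0 | apply: divr_ge0 => //; apply: exprn_ge0; lra].
  - apply: mulr_ge0; first by apply: ler0n.
    apply: mulr_ge0; first lra.
    by apply: mulr_ge0; [apply: exprn_ge0; lra | apply: expR_ge0].
apply: (le_trans (ler_wpM2r hT hPm)).
have hX : m%:R * (`|N1| / P) + m%:R ^+ 2 * (`|N2| / P ^+ 2) +
   (size L)%:R * (4 * ((96 * t) ^+ 3 * expR (96 * t)))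
   <= C0 * (m%:R * p ^+ k) + C0 * t ^+ 2.
  have hmk : 0 <= m%:R * p ^+ k by apply: mulr_ge0.
  have ht2 : 0 <= t ^+ 2 by apply: exprn_ge0.
  have hc1 : 160 * (m%:R * p ^+ k) <= C0 * (m%:R * p ^+ k).
    apply: ler_wpM2r; first exact: hmk.
    rewrite /C0.
    have ha : 0 < (96 : R) ^+ 3 by apply: exprn_gt0; lra.
    have := mulr_gt0 ha (expR_gt0 96); lra.
  have hc2 : (9600 + 64 * 96 ^+ 3 * expR 96) * t ^+ 2 <= C0 * t ^+ 2.
    apply: ler_wpM2r; first exact: ht2.
    rewrite /C0; lra.
  lra.
have -> : C0 * (m%:R * p ^+ k * E + t ^+ 2 * E) = E * (C0 * (m%:R * p ^+ k) + C0 * t ^+ 2) by ring.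
by apply: ler_wpM2l.
Qed.

End Ana.

End B.
Import B.

Module C.

Section Q.
Variables (R : realType) (m : nat) (p : R).
Local Notation r := (1 - p ^+ 2).
Local Notation psi := (A.psi R p).

Definition L1 : seq (R * (bool -> R)) :=
  [:: (1, fun _ => r * r); (-2, fun b => r * psi b); (1, fun b => psi b * psi b)].

Definition T1 : seq (R * R) :=
  [seq (u.1 * v.1, (1 - p) * (u.2 false * v.2 false) + p * (u.2 true * v.2 true)) | u <- L1, v <- L1].

Lemma gbar1E (x : pt m) : gbar1 m p [:: x] = \prod_(i < m) r - \prod_i psi (x i).
Proof. by rewrite /gbar1 /= g1_prod phat_prod; ring. Qed.

Lemma Q1eq : norm2sq m p (contr_dim 1 1 0 1) (contr m p 1 1 0 1 (gbar1 m p) (gbar1 m p))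
  = \sum_(w <- T1) w.1 * w.2 ^+ m.
Proof.
rewrite /norm2sq /contr_dim /= intj1.
rewrite (eq_bigr (fun x : pt m => mu m p x * (\sum_(u <- L1) u.1 * \prod_i u.2 (x i)) ^+ 2)); last first.
  move=> x _; congr (_ * _ ^+ 2).
  rewrite /contr /= intj0 /= gbar1E /L1 !big_cons big_nil /= !big_split /=.
  ring.
by rewrite Sq1 /T1 big_allpairs_dep.
Qed.

Local Notation chi := (A.chi R).

Lemma gbar2E (x y : pt m) : gbar2 m p [:: x; y] = \prod_(i < m) r - \prod_i chi (x i) (y i).
Proof. by rewrite /gbar2 /= g_prod phat_prod; ring. Qed.

Definition L3 : seq (R * (bool -> bool -> R)) :=
  [:: (1, fun _ _ => r * r); (-1, fun b c => r * chi b c); (-1, fun b c => r * psi b);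
      (1, fun b c => chi b c * psi b)].

Definition T3 : seq (R * R) :=
  [seq (u.1 * v.1, (1 - p) * (u.2 false * v.2 false) + p * (u.2 true * v.2 true))
    | u <- map (H1 R p) L3, v <- map (H1 R p) L3].

Lemma Q3eq : norm2sq m p (contr_dim 2 1 1 1) (contr m p 2 1 1 1 (gbar2 m p) (gbar1 m p))
  = \sum_(w <- T3) w.1 * w.2 ^+ m.
Proof.
rewrite /norm2sq /contr_dim /= intj1.
rewrite (eq_bigr (fun y : pt m => mu m p y * (\sum_(u <- map (H1 R p) L3) u.1 * \prod_i u.2 (y i)) ^+ 2)); last first.
  move=> y _; congr (_ * _ ^+ 2).
  rewrite -(Lin1 _ _ _ L3 y) /contr intj1 /=; apply: eq_bigr => x _; congr (_ * _).
  rewrite gbar2E gbar1E /L3 !big_cons big_nil /= !big_split /=.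
  ring.
by rewrite Sq1 /T3 big_allpairs_dep.
Qed.

Definition L2 : seq (R * (bool -> bool -> bool -> R)) :=
  [:: (1, fun _ _ _ => r * r); (-1, fun b c d => r * chi b c); (-1, fun b c d => r * chi b d);
      (1, fun b c d => chi b c * chi b d)].

Definition T2 : seq (R * R) :=
  [seq (u.1 * v.1,
      (1 - p) * ((1 - p) * (u.2 false false * v.2 false false) + p * (u.2 false true * v.2 false true))
       + p * ((1 - p) * (u.2 true false * v.2 true false) + p * (u.2 true true * v.2 true true)))
    | u <- map (H2 R p) L2, v <- map (H2 R p) L2].

Lemma Q2eq : norm2sq m p (contr_dim 2 2 1 1) (contr m p 2 2 1 1 (gbar2 m p) (gbar2 m p))
  = \sum_(w <- T2) w.1 * w.2 ^+ m.
Proof.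
rewrite /norm2sq /contr_dim /= intj2.
rewrite (eq_bigr (fun y : pt m => \sum_(z : pt m) mu m p y * mu m p z *
   (\sum_(u <- map (H2 R p) L2) u.1 * \prod_i u.2 (y i) (z i)) ^+ 2)); last first.
  move=> y _; apply: eq_bigr => z _; congr (_ * _ ^+ 2).
  rewrite -(Lin2 _ _ _ L2 y z) /contr intj1 /=; apply: eq_bigr => x _; congr (_ * _).
  rewrite !gbar2E /L2 !big_cons big_nil /= !big_split /=.
  ring.
by rewrite Sq2 /T2 big_allpairs_dep.
Qed.

End Q.

End C.
Import C.

Module D.

Section T.
Variables (R : realType) (p : R).

Lemma pw (j i : nat) : 0 < p -> p <= 1/2 -> (j <= i)%N -> 0 <= p ^+ i <= p ^+ j.
Proof.
move=> hp hp2 hji; apply/andP; split; first by apply: exprn_ge0; lra.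
by rewrite -(subnKC hji) exprD ler_piMr //; [apply: exprn_ge0; lra | apply: exprn_ile1; lra].
Qed.

Ltac solve_abs := rewrite ler_norml; apply/andP; split; lra.



Lemma T1_sum : \sum_(w <- T1 R p) w.1 = 0.
Proof. rewrite /T1 /L1 /A.psi /= !big_cons big_nil /=; lra. Qed.

Lemma T1_all : 0 < p -> p <= 1/2 ->
  all (fun w => (`|w.1| <= 4) && (`|w.2 - (1 - p ^+ 2) ^+ 4| <= 24 * p ^+ 3)) (T1 R p).
Proof.
move=> hp hp2; rewrite /T1 /L1 /A.psi /=.
have := pw 3 4 hp hp2 isT; have := pw 3 5 hp hp2 isT; have := pw 3 6 hp hp2 isT; have := pw 3 7 hp hp2 isT; have := pw 3 8 hp hp2 isT; have := pw 3 9 hp hp2 isT; have := pw 3 10 hp hp2 isT; have := pw 3 11 hp hp2 isT; have := pw 3 12 hp hp2 isT; have := pw 0 3 hp hp2 isT => *.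
repeat (apply/andP; split).
all: first [exact: isT | solve_abs].
Qed.

Lemma T1_N1 : 0 < p -> p <= 1/2 ->
  `|\sum_(w <- T1 R p) w.1 * w.2| <= 14 * p ^+ 5.
Proof.
move=> hp hp2; rewrite /T1 /L1 /A.psi /= !big_cons big_nil /=.
have := pw 5 6 hp hp2 isT; have := pw 5 7 hp hp2 isT; have := pw 5 8 hp hp2 isT; have := pw 5 9 hp hp2 isT; have := pw 5 10 hp hp2 isT; have := pw 5 11 hp hp2 isT; have := pw 5 12 hp hp2 isT; have := pw 0 5 hp hp2 isT => *.
solve_abs.
Qed.

Lemma T1_N2 : 0 < p -> p <= 1/2 ->
  `|\sum_(w <- T1 R p) w.1 * (w.2 - (1 - p ^+ 2) ^+ 4) ^+ 2| <= 600 * p ^+ 6.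
Proof.
move=> hp hp2; rewrite /T1 /L1 /A.psi /= !big_cons big_nil /=.
have := pw 6 7 hp hp2 isT; have := pw 6 8 hp hp2 isT; have := pw 6 9 hp hp2 isT; have := pw 6 10 hp hp2 isT; have := pw 6 11 hp hp2 isT; have := pw 6 12 hp hp2 isT; have := pw 6 13 hp hp2 isT; have := pw 6 14 hp hp2 isT; have := pw 6 15 hp hp2 isT; have := pw 6 16 hp hp2 isT; have := pw 6 17 hp hp2 isT; have := pw 6 18 hp hp2 isT; have := pw 6 19 hp hp2 isT; have := pw 6 20 hp hp2 isT; have := pw 0 6 hp hp2 isT => *.
solve_abs.
Qed.

Lemma T3_sum : \sum_(w <- T3 R p) w.1 = 0.
Proof. rewrite /T3 /L3 /A.psi /A.chi /H1 /= !big_cons big_nil /=; lra. Qed.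

Lemma T3_all : 0 < p -> p <= 1/2 ->
  all (fun w => (`|w.1| <= 4) && (`|w.2 - (1 - p ^+ 2) ^+ 4| <= 24 * p ^+ 3)) (T3 R p).
Proof.
move=> hp hp2; rewrite /T3 /L3 /A.psi /A.chi /H1 /=.
have := pw 3 4 hp hp2 isT; have := pw 3 5 hp hp2 isT; have := pw 3 6 hp hp2 isT; have := pw 3 7 hp hp2 isT; have := pw 3 8 hp hp2 isT; have := pw 3 9 hp hp2 isT; have := pw 3 10 hp hp2 isT; have := pw 3 11 hp hp2 isT; have := pw 3 12 hp hp2 isT; have := pw 0 3 hp hp2 isT => *.
repeat (apply/andP; split).
all: first [exact: isT | solve_abs].
Qed.

Lemma T3_N1 : 0 < p -> p <= 1/2 ->
  `|\sum_(w <- T3 R p) w.1 * w.2| <= 4 * p ^+ 5.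
Proof.
move=> hp hp2; rewrite /T3 /L3 /A.psi /A.chi /H1 /= !big_cons big_nil /=.
have := pw 5 6 hp hp2 isT; have := pw 5 7 hp hp2 isT; have := pw 5 8 hp hp2 isT; have := pw 5 9 hp hp2 isT; have := pw 5 10 hp hp2 isT; have := pw 5 11 hp hp2 isT; have := pw 5 12 hp hp2 isT; have := pw 0 5 hp hp2 isT => *.
solve_abs.
Qed.

Lemma T3_N2 : 0 < p -> p <= 1/2 ->
  `|\sum_(w <- T3 R p) w.1 * (w.2 - (1 - p ^+ 2) ^+ 4) ^+ 2| <= 600 * p ^+ 6.
Proof.
move=> hp hp2; rewrite /T3 /L3 /A.psi /A.chi /H1 /= !big_cons big_nil /=.
have := pw 6 7 hp hp2 isT; have := pw 6 8 hp hp2 isT; have := pw 6 9 hp hp2 isT; have := pw 6 10 hp hp2 isT; have := pw 6 11 hp hp2 isT; have := pw 6 12 hp hp2 isT; have := pw 6 13 hp hp2 isT; have := pw 6 14 hp hp2 isT; have := pw 6 15 hp hp2 isT; have := pw 6 16 hp hp2 isT; have := pw 6 17 hp hp2 isT; have := pw 6 18 hp hp2 isT; have := pw 6 19 hp hp2 isT; have := pw 6 20 hp hp2 isT; have := pw 0 6 hp hp2 isT => *.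
solve_abs.
Qed.

Lemma T2_sum : \sum_(w <- T2 R p) w.1 = 0.
Proof. rewrite /T2 /L2 /A.chi /H2 /= !big_cons big_nil /=; lra. Qed.

Lemma T2_all : 0 < p -> p <= 1/2 ->
  all (fun w => (`|w.1| <= 4) && (`|w.2 - (1 - p ^+ 2) ^+ 4| <= 24 * p ^+ 3)) (T2 R p).
Proof.
move=> hp hp2; rewrite /T2 /L2 /A.chi /H2 /=.
have := pw 3 4 hp hp2 isT; have := pw 3 5 hp hp2 isT; have := pw 3 6 hp hp2 isT; have := pw 3 7 hp hp2 isT; have := pw 3 8 hp hp2 isT; have := pw 3 9 hp hp2 isT; have := pw 3 10 hp hp2 isT; have := pw 3 11 hp hp2 isT; have := pw 3 12 hp hp2 isT; have := pw 0 3 hp hp2 isT => *.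
repeat (apply/andP; split).
all: first [exact: isT | solve_abs].
Qed.

Lemma T2_N1 : 0 < p -> p <= 1/2 ->
  `|\sum_(w <- T2 R p) w.1 * w.2| <= 10 * p ^+ 4.
Proof.
move=> hp hp2; rewrite /T2 /L2 /A.chi /H2 /= !big_cons big_nil /=.
have := pw 4 5 hp hp2 isT; have := pw 4 6 hp hp2 isT; have := pw 4 7 hp hp2 isT; have := pw 4 8 hp hp2 isT; have := pw 4 9 hp hp2 isT; have := pw 4 10 hp hp2 isT; have := pw 4 11 hp hp2 isT; have := pw 4 12 hp hp2 isT; have := pw 0 4 hp hp2 isT => *.
solve_abs.
Qed.

Lemma T2_N2 : 0 < p -> p <= 1/2 ->
  `|\sum_(w <- T2 R p) w.1 * (w.2 - (1 - p ^+ 2) ^+ 4) ^+ 2| <= 600 * p ^+ 6.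
Proof.
move=> hp hp2; rewrite /T2 /L2 /A.chi /H2 /= !big_cons big_nil /=.
have := pw 6 7 hp hp2 isT; have := pw 6 8 hp hp2 isT; have := pw 6 9 hp hp2 isT; have := pw 6 10 hp hp2 isT; have := pw 6 11 hp hp2 isT; have := pw 6 12 hp hp2 isT; have := pw 6 13 hp hp2 isT; have := pw 6 14 hp hp2 isT; have := pw 6 15 hp hp2 isT; have := pw 6 16 hp hp2 isT; have := pw 6 17 hp hp2 isT; have := pw 6 18 hp hp2 isT; have := pw 6 19 hp hp2 isT; have := pw 6 20 hp hp2 isT; have := pw 0 6 hp hp2 isT => *.
solve_abs.
Qed.

End T.

End D.
Import D.


Lemma aux_p (R : realType) (m : nat) (p : R) :
  (8 < m)%N -> 0 < p -> m%:R * p ^+ 3 <= 1 -> p <= 1/2.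
Proof.
move=> hm hp ht.
have hm9 : (9 : R) <= m%:R by rewrite ler_nat.
rewrite leNgt; apply/negP => h.
have e : p ^+ 3 = p * (p * p) by rewrite !exprS expr0 mulr1.
rewrite e in ht.
have h2 : 1/4 < p * p by nra.
have h3 : 1/8 < p * (p * p) by nra.
nra.
Qed.

Lemma aux_P1 (R : realType) (p : R) : 0 < p -> p <= 1/2 -> 1/4 <= (1 - p ^+ 2) ^+ 4.
Proof.
move=> hp hp2.
have hr : 3/4 <= 1 - p ^+ 2 by rewrite expr2; nra.
have h : (3/4) ^+ 4 <= (1 - p ^+ 2) ^+ 4.
  by apply: lerXn2r; rewrite ?nnegrE //; lra.
apply: le_trans h.
rewrite !exprS expr0 mulr1; lra.
Qed.

Lemma aux_PE (R : realType) (p : R) : 0 < p -> p <= 1/2 ->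
  (1 - p ^+ 2) ^+ 4 <= expR (- (4 * p ^+ 2)).
Proof.
move=> hp hp2.
have hr : 3/4 <= 1 - p ^+ 2 by rewrite expr2; nra.
have -> : - (4 * p ^+ 2) = 4%:R * (- p ^+ 2) by ring.
rewrite expRM_natl; apply: lerXn2r.
- by rewrite nnegrE; lra.
- by rewrite nnegrE; apply: expR_ge0.
- by have := expR_ge1Dx (- p ^+ 2); lra.
Qed.

Theorem lemma6p1 (R : realType) :
  exists (m0 : nat) (C : R), 0 < C /\
  forall (n m : nat) (p : R), (m0 < m)%N -> 0 < p -> p < 1 ->
    m%:R * p ^+ 3 <= 1 ->
    let E := expR (- (4 * m%:R * p ^+ 2)) in
    [/\ norm2sq m p (contr_dim 1 1 0 1) (contr m p 1 1 0 1 (gbar1 m p) (gbar1 m p))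
          <= C * (m%:R * p ^+ 5 * E + (m%:R * p ^+ 3) ^+ 2 * E),
        norm2sq m p (contr_dim 2 2 1 1) (contr m p 2 2 1 1 (gbar2 m p) (gbar2 m p))
          <= C * (m%:R * p ^+ 4 * E + (m%:R * p ^+ 3) ^+ 2 * E)
      & norm2sq m p (contr_dim 2 1 1 1) (contr m p 2 1 1 1 (gbar2 m p) (gbar1 m p))
          <= C * (m%:R * p ^+ 5 * E + (m%:R * p ^+ 3) ^+ 2 * E)].
Proof.
exists 8%N, (C0 R); split; first exact: C0_gt0.
move=> n m p hm hp hp1 ht E.
have hp2 := aux_p _ _ _ hm hp ht.
have hP1 := aux_P1 _ _ hp hp2.
have hPE := aux_PE _ _ hp hp2.
have k14 : (0 : R) <= (14 : R) <= (40 : R) by apply/andP; split; lra.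
have k10 : (0 : R) <= (10 : R) <= (40 : R) by apply/andP; split; lra.
have k4 : (0 : R) <= (4 : R) <= (40 : R) by apply/andP; split; lra.
have k600 : (0 : R) <= (600 : R) <= (600 : R) by apply/andP; split; lra.
split.
- rewrite Q1eq; apply: (master2 R (T1 R p) m 5 p 14 600 hp ht hP1 hPE k14 k600).
  + by [].
  + exact: T1_sum.
  + exact: T1_all.
  + exact: T1_N1.
  + exact: T1_N2.
- rewrite Q2eq; apply: (master2 R (T2 R p) m 4 p 10 600 hp ht hP1 hPE k10 k600).
  + by [].
  + exact: T2_sum.
  + exact: T2_all.
  + exact: T2_N1.
  + exact: T2_N2.
- rewrite Q3eq; apply: (master2 R (T3 R p) m 5 p 4 600 hp ht hP1 hPE k4 k600).
  + by [].
  + exact: T3_sum.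
  + exact: T3_all.
  + exact: T3_N1.
  + exact: T3_N2.
Qed.
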